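(* Let $d\ge 2$ be an integer and let $a_1,\dots,a_d,b_1,\dots,b_d$ be positive real numbers. Then there is a unique pair $(\lambda,f)=(\lambda,f_1,\dots,f_d)\in\mathbb{R}\times C^2([0,1];(0,\infty)^d)$ such that $$\sum_{i=1}^d\left(-\frac{f_i'}{f_i}\sum_{k=1}^d\frac{f_k'}{f_k}+\frac{f_i'^2}{f_i^2}\right)\Bigg|_{r=0}=(d-1)\lambda,$$ $$-\frac{f_i'}{f_i}\sum_{k=1}^d\frac{f_k'}{f_k}+\frac{f_i'^2}{f_i^2}-\frac{f_i''}{f_i}=\lambda\quad\text{on }[0,1],\ i=1,\dots,d,$$ and $f_i(0)=a_i$, $f_i(1)=b_i$ for each $i=1,\dots,d$.
   Context: These are the Einstein equations for a metric $dr\otimes dr+\sum_i f_i(r)^2\,dx_i^2$ on $\mathbb{T}^d\times[0,1]$ with Einstein constant $\lambda$; primes denote derivatives in $r\in[0,1]$. *)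

(* Defs.v *)
From Stdlib Require Import Reals.
From Coquelicot Require Import Coquelicot.
Open Scope R_scope.

Definition I01 (x : R) : Prop := 0 <= x <= 1.

Definition has_deriv_01 (f g : R -> R) : Prop :=
  forall x, I01 x ->
    filterlim (fun h => (f (x + h) - f x) / h)
      (within (fun h => h <> 0 /\ I01 (x + h)) (locally 0))
      (locally (g x)).

Definition cont_01 (g : R -> R) : Prop :=
  forall x, I01 x -> filterlim g (within I01 (locally x)) (locally (g x)).

(* Sum over k = 0, ..., d-1 (d >= 1). *)
Definition sumd (d : nat) (F : nat -> R) : R := sum_f_R0 F (pred d).

Definition is_solution (d : nat) (a b : nat -> R) (lam : R) (f : nat -> R -> R)
  : Prop :=
  exists f1 f2 : nat -> R -> R,
    (forall i, (i < d)%nat ->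
       has_deriv_01 (f i) (f1 i) /\ has_deriv_01 (f1 i) (f2 i) /\
       cont_01 (f2 i) /\ (forall r, I01 r -> 0 < f i r)) /\
    sumd d (fun i => - (f1 i 0 / f i 0) * sumd d (fun k => f1 k 0 / f k 0)
                     + (f1 i 0 / f i 0) ^ 2) = INR (d - 1) * lam /\
    (forall i r, (i < d)%nat -> I01 r ->
       - (f1 i r / f i r) * sumd d (fun k => f1 k r / f k r)
       + (f1 i r / f i r) ^ 2 - f2 i r / f i r = lam) /\
    (forall i, (i < d)%nat -> f i 0 = a i /\ f i 1 = b i).

(* Main.v *)
Require Import Defs.
From Stdlib Require Import Reals Ranalysis5 Lra Lia ClassicalEpsilon.
From Coquelicot Require Import Coquelicot.
Open Scope R_scope.

Definition clamp (x : R) : R := Rmax 0 (Rmin x 1).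

Lemma clamp_id x : I01 x -> clamp x = x.
Proof. unfold I01, clamp; intros [H1 H2].
  rewrite Rmin_left by lra. rewrite Rmax_right by lra. reflexivity. Qed.

Lemma clamp_I01 x : I01 (clamp x).
Proof. unfold I01, clamp. split.
  apply Rmax_l. apply Rmax_lub; [lra| apply Rmin_r]. Qed.

Lemma clamp_lip x y : Rabs (clamp y - clamp x) <= Rabs (y - x).
Proof. unfold clamp, Rmax, Rmin.
  repeat (destruct Rle_dec); unfold Rabs; repeat destruct Rcase_abs; lra.
Qed.

Lemma hd_eps f g x : has_deriv_01 f g -> I01 x -> forall e, 0 < e ->
  exists d, 0 < d /\ forall h, h <> 0 -> Rabs h < d -> I01 (x + h) ->
    Rabs ((f (x + h) - f x) / h - g x) < e.
Proof.
  intros H Hx e He.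
  destruct (H x Hx (ball (g x) e) (locally_ball (g x) (mkposreal e He))) as [d Hd].
  exists d; split; [apply cond_pos|].
  intros h H0 Hh Hi.
  assert (B : ball 0 d h).
  { unfold ball; simpl; unfold AbsRing_ball, abs, minus, plus, opp; simpl.
    replace (h + - 0) with h by ring. exact Hh. }
  specialize (Hd h B (conj H0 Hi)).
  unfold ball in Hd; simpl in Hd; unfold AbsRing_ball, abs, minus, plus, opp in Hd; simpl in Hd.
  exact Hd.
Qed.

Definition CC (h : R -> R) : Prop := forall x, I01 x -> continuity_pt (fun t => h (clamp t)) x.

Definition D01 (h h' : R -> R) : Prop :=
  CC h /\ forall x, 0 < x < 1 -> derivable_pt_lim h x (h' x).

Lemma hd_CC f g : has_deriv_01 f g -> CC f.
Proof.
  intros H x Hx e He.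
  destruct (hd_eps f g x H Hx 1 Rlt_0_1) as [d [Hd Hq]].
  set (M := Rabs (g x) + 1).
  assert (HM : 0 < M) by (unfold M; pose proof (Rabs_pos (g x)); lra).
  exists (Rmin d (e / M)); split.
  { apply Rmin_pos; [lra| apply Rdiv_lt_0_compat; lra]. }
  intros t [_ Ht]. simpl in *. unfold R_dist in *.
  rewrite (clamp_id x Hx).
  pose proof (clamp_lip x t) as Hl. rewrite (clamp_id x Hx) in Hl.
  set (h := clamp t - x) in *.
  replace (clamp t) with (x + h) by (unfold h; ring).
  destruct (Req_dec h 0) as [Z|NZ].
  { rewrite Z, Rplus_0_r, Rminus_diag, Rabs_R0; lra. }
  assert (Hh : Rabs h < d) by (pose proof (Rmin_l d (e/M)); lra).
  assert (HI : I01 (x + h)) by (unfold h; replace (x + (clamp t - x)) with (clamp t) by ring; apply clamp_I01).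
  specialize (Hq h NZ Hh HI).
  set (q := (f (x + h) - f x) / h) in *.
  assert (Eq : f (x + h) - f x = q * h) by (unfold q; field; exact NZ).
  rewrite Eq, Rabs_mult.
  assert (Rabs q < M).
  { unfold M. pose proof (Rabs_triang_inv q (g x)). lra. }
  assert (Rabs h < e / M) by (pose proof (Rmin_r d (e/M)); lra).
  assert (0 < Rabs h) by (apply Rabs_pos_lt; exact NZ).
  apply Rle_lt_trans with (M * Rabs h).
  { apply Rmult_le_compat_r; lra. }
  replace e with (M * (e / M)) by (field; lra).
  apply Rmult_lt_compat_l; lra.
Qed.

Lemma hd_deriv f g x : has_deriv_01 f g -> 0 < x < 1 -> derivable_pt_lim f x (g x).
Proof.
  intros H Hx e He.
  destruct (hd_eps f g x H (conj (Rlt_le _ _ (proj1 Hx)) (Rlt_le _ _ (proj2 Hx))) e He) as [d [Hd Hq]].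
  assert (Hp : 0 < Rmin d (Rmin x (1 - x))) by (repeat apply Rmin_pos; lra).
  exists (mkposreal _ Hp). intros h NZ Hh. simpl in Hh.
  apply Hq; auto.
  - pose proof (Rmin_l d (Rmin x (1-x))); lra.
  - pose proof (Rmin_r d (Rmin x (1-x))); pose proof (Rmin_l x (1-x)); pose proof (Rmin_r x (1-x)).
    unfold I01. unfold Rabs in Hh; destruct Rcase_abs in Hh; lra.
Qed.

Lemma hd_D01 f g : has_deriv_01 f g -> D01 f g.
Proof. intros H; split; [eapply hd_CC; eauto| intros; apply hd_deriv; auto]. Qed.

Lemma clamp_cont x : continuity_pt clamp x.
Proof.
  intros e He. exists e; split; auto. intros t [_ Ht]. simpl in *. unfold R_dist in *.
  pose proof (clamp_lip x t). lra.
Qed.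

Lemma locally_int x : 0 < x < 1 -> locally x (fun t => 0 < t < 1).
Proof.
  intros Hx. assert (Hp : 0 < Rmin x (1 - x)) by (apply Rmin_pos; lra).
  exists (mkposreal _ Hp). intros y Hy.
  unfold ball in Hy; simpl in Hy; unfold AbsRing_ball, abs, minus, plus, opp in Hy; simpl in Hy.
  pose proof (Rmin_l x (1-x)); pose proof (Rmin_r x (1-x)).
  unfold Rabs in Hy; destruct Rcase_abs in Hy; lra.
Qed.

Lemma deriv_ext_int h g x l : 0 < x < 1 -> (forall t, 0 < t < 1 -> h t = g t) ->
  derivable_pt_lim h x l -> derivable_pt_lim g x l.
Proof.
  intros Hx E D. apply is_derive_Reals. apply is_derive_Reals in D.
  eapply is_derive_ext_loc; [|exact D].
  generalize (locally_int x Hx). apply filter_imp. intros t Ht. apply E; auto.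
Qed.

Lemma deriv_clamp h x l : 0 < x < 1 -> derivable_pt_lim h x l ->
  derivable_pt_lim (fun t => h (clamp t)) x l.
Proof.
  intros Hx D. eapply deriv_ext_int; eauto. intros t Ht. simpl. rewrite clamp_id; auto.
  unfold I01; lra.
Qed.

Lemma CC_glob h : (forall x, I01 x -> continuity_pt h x) -> CC h.
Proof.
  intros H x Hx. apply (continuity_pt_comp clamp h x (clamp_cont x)).
  rewrite clamp_id; auto.
Qed.

Lemma D01_glob h h' : (forall x, I01 x -> derivable_pt_lim h x (h' x)) -> D01 h h'.
Proof.
  intros H; split.
  - apply CC_glob. intros x Hx. apply derivable_continuous_pt. exact (exist _ (h' x) (H x Hx)).
  - intros y Hy; apply H; unfold I01; lra.
Qed.

Lemma CC_comp h phi : CC h -> (forall x, I01 x -> continuity_pt phi (h x)) ->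
  CC (fun x => phi (h x)).
Proof.
  intros H P x Hx. apply (continuity_pt_comp (fun t => h (clamp t)) phi x (H x Hx)).
  rewrite clamp_id; auto.
Qed.

Lemma D01_CC h h' : D01 h h' -> CC h.
Proof. intros [H _]; exact H. Qed.

Lemma D01_der h h' x : D01 h h' -> 0 < x < 1 -> derivable_pt_lim h x (h' x).
Proof. intros [_ H]; auto. Qed.

Lemma D01_plus h1 h1' h2 h2' : D01 h1 h1' -> D01 h2 h2' ->
  D01 (fun x => h1 x + h2 x) (fun x => h1' x + h2' x).
Proof.
  intros [C1 D1] [C2 D2]; split.
  - intros x Hx. exact (continuity_pt_plus _ _ x (C1 x Hx) (C2 x Hx)).
  - intros x Hx. exact (derivable_pt_lim_plus _ _ x _ _ (D1 x Hx) (D2 x Hx)).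
Qed.

Lemma D01_minus h1 h1' h2 h2' : D01 h1 h1' -> D01 h2 h2' ->
  D01 (fun x => h1 x - h2 x) (fun x => h1' x - h2' x).
Proof.
  intros [C1 D1] [C2 D2]; split.
  - intros x Hx. exact (continuity_pt_minus _ _ x (C1 x Hx) (C2 x Hx)).
  - intros x Hx. exact (derivable_pt_lim_minus _ _ x _ _ (D1 x Hx) (D2 x Hx)).
Qed.

Lemma D01_mult h1 h1' h2 h2' : D01 h1 h1' -> D01 h2 h2' ->
  D01 (fun x => h1 x * h2 x) (fun x => h1' x * h2 x + h1 x * h2' x).
Proof.
  intros [C1 D1] [C2 D2]; split.
  - intros x Hx. exact (continuity_pt_mult _ _ x (C1 x Hx) (C2 x Hx)).
  - intros x Hx. exact (derivable_pt_lim_mult _ _ x _ _ (D1 x Hx) (D2 x Hx)).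
Qed.

Lemma D01_const c : D01 (fun _ => c) (fun _ => 0).
Proof. apply D01_glob. intros; apply derivable_pt_lim_const. Qed.

Lemma D01_id : D01 (fun x => x) (fun _ => 1).
Proof. apply D01_glob. intros; apply derivable_pt_lim_id. Qed.

Lemma D01_comp h h' phi phi' (P : R -> Prop) : D01 h h' ->
  (forall x, I01 x -> P (h x)) -> (forall y, P y -> derivable_pt_lim phi y (phi' y)) ->
  D01 (fun x => phi (h x)) (fun x => phi' (h x) * h' x).
Proof.
  intros [C D] HP Hphi; split.
  - apply CC_comp; auto. intros x Hx. apply derivable_continuous_pt. exact (exist _ (phi' (h x)) (Hphi _ (HP x Hx))).
  - intros x Hx. apply (derivable_pt_lim_comp h phi x). apply D; auto. apply Hphi, HP.
    unfold I01; lra.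
Qed.

Lemma D01_ext h h' g g' : D01 h h' -> (forall x, I01 x -> h x = g x) ->
  (forall x, 0 < x < 1 -> h' x = g' x) -> D01 g g'.
Proof.
  intros [C D] E E'; split.
  - intros x Hx. eapply continuity_pt_ext; [|exact (C x Hx)]. intros t; simpl.
    apply E, clamp_I01.
  - intros x Hx. rewrite <- E' by auto. apply (deriv_ext_int h g x); [exact Hx| |apply D; exact Hx]. intros t Ht; apply E; unfold I01; lra.

Qed.

Lemma D01_sum (h h' : nat -> R -> R) n : (forall k, (k <= n)%nat -> D01 (h k) (h' k)) ->
  D01 (fun x => sum_f_R0 (fun k => h k x) n) (fun x => sum_f_R0 (fun k => h' k x) n).
Proof.
  induction n; intros H; simpl.
  - apply H; lia.
  - apply D01_plus. apply IHn; intros; apply H; lia. apply H; lia.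
Qed.

Lemma mvt01 h h' x y : D01 h h' -> 0 <= x -> x < y -> y <= 1 ->
  exists c, x < c < y /\ h y - h x = h' c * (y - x).
Proof.
  intros [C D] H0 Hxy H1.
  set (hc := fun t => h (clamp t)).
  assert (pr1 : forall c, x < c < y -> derivable_pt hc c).
  { intros c Hc. exists (h' c). apply deriv_clamp. lra. apply D. lra. }
  assert (pr2 : forall c, x < c < y -> derivable_pt id c).
  { intros c Hc. apply derivable_pt_id. }
  destruct (MVT hc id x y pr1 pr2 Hxy) as [c [P E]].
  - intros c Hc. apply C. unfold I01; lra.
  - intros c Hc. apply derivable_continuous_pt, derivable_pt_id.
  - exists c; split; auto.
    rewrite (derive_pt_eq_0 hc c (h' c) (pr1 c P)) in E.
    2:{ apply deriv_clamp. lra. apply D. lra. }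
    rewrite (derive_pt_eq_0 id c 1 (pr2 c P)) in E by apply derivable_pt_lim_id.
    unfold hc, id in E. rewrite !clamp_id in E by (unfold I01; lra). lra.
Qed.

Lemma const01 h h' : D01 h h' -> (forall x, 0 < x < 1 -> h' x = 0) ->
  forall x, I01 x -> h x = h 0.
Proof.
  intros D Z x [Hx0 Hx1]. destruct (Req_dec x 0) as [E|NE]; [subst; auto|].
  destruct (mvt01 h h' 0 x D) as [c [Hc E]]; try lra.
  rewrite Z in E by lra. lra.
Qed.

Lemma mono01 h h' x y : D01 h h' -> (forall x, 0 < x < 1 -> 0 < h' x) ->
  0 <= x -> x < y -> y <= 1 -> h x < h y.
Proof.
  intros D P H0 Hxy H1. destruct (mvt01 h h' x y D) as [c [Hc E]]; try lra.
  specialize (P c ltac:(lra)). nra.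
Qed.

Lemma RInt_deriv f : (forall x, continuity_pt f x) ->
  forall x, derivable_pt_lim (fun y => RInt f 0 y) x (f x).
Proof.
  intros C x. apply is_derive_Reals. apply (is_derive_RInt f (fun y => RInt f 0 y) 0 x).
  - apply filter_forall. intros y. apply (@RInt_correct R_CompleteNormedModule), (@ex_RInt_continuous R_CompleteNormedModule).
    intros z _. apply continuity_pt_filterlim, C.
  - apply continuity_pt_filterlim, C.
Qed.

Lemma incr_glob F F' : (forall x, derivable_pt_lim F x (F' x)) -> (forall x, 0 < F' x) ->
  forall x y, x < y -> F x < F y.
Proof.
  intros D P x y Hxy.
  destruct (MVT_gen F x y F') as [c [Hc E]].
  - intros z _. apply is_derive_Reals, D.
  - intros z _. apply derivable_continuous_pt. exact (exist _ (F' z) (D z)).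
  - specialize (P c). nra.
Qed.

Lemma inv_deriv F F' s : (forall x, derivable_pt_lim F x (F' x)) -> (forall x, 0 < F' x) ->
  (forall r, F (s r) = r) -> forall r, derivable_pt_lim s r (/ F' (s r)).
Proof.
  intros D P Inv r.
  assert (Inc := incr_glob F F' D P).
  assert (Sinc : forall x y, x < y -> s x < s y).
  { intros x y Hxy. destruct (Rlt_le_dec (s x) (s y)) as [h|h]; auto.
    destruct (Rle_lt_or_eq_dec _ _ h) as [h'|h'].
    - apply Inc in h'. rewrite !Inv in h'. lra.
    - rewrite <- (Inv x), <- (Inv y), h' in Hxy. lra. }
  assert (Sle : forall x y, x <= y -> s x <= s y).
  { intros x y Hxy. destruct (Rle_lt_or_eq_dec _ _ Hxy) as [h|h].
    apply Rlt_le, Sinc, h. subst; lra. }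
  assert (Prf : forall a, s (r - 1) <= a <= s (r + 1) -> derivable_pt F a).
  { intros a _. exact (exist _ (F' a) (D a)). }
  assert (Cs : continuity_pt s r).
  { apply (continuity_pt_recip_interv F s (s (r - 1)) (s (r + 1))).
    - apply Sinc; lra.
    - intros x y _ Hxy _. apply Inc, Hxy.
    - intros x _ _. unfold comp, id. apply Inv.
    - intros x H1 H2. rewrite Inv in H1, H2. split; apply Sle; lra.
    - intros a _. apply derivable_continuous_pt. exact (exist _ (F' a) (D a)).
    - rewrite !Inv. lra. }
  assert (Hin : s (r - 1) <= s r <= s (r + 1)) by (split; apply Sle; lra).
  pose proof (derivable_pt_lim_recip_interv F s (r - 1) (r + 1) r Prf Cs
     ltac:(lra) ltac:(lra) Hin) as H.
  rewrite (derive_pt_eq_0 F (s r) (F' (s r)) (Prf (s r) Hin) (D (s r))) in H.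
  replace (/ F' (s r)) with (1 / F' (s r)) by (field; specialize (P (s r)); lra).
  apply H.
  - intros x _. unfold comp, id. apply Inv.
  - specialize (P (s r)); lra.
Qed.

Lemma dl_eq f x l l' : derivable_pt_lim f x l -> l = l' -> derivable_pt_lim f x l'.
Proof. intros H ->; exact H. Qed.
Lemma dl_ext f g x l : (forall y, f y = g y) -> derivable_pt_lim f x l -> derivable_pt_lim g x l.
Proof. intros E H e He. destruct (H e He) as [d Hd]. exists d. intros h H1 H2. rewrite <- !E. auto. Qed.
Lemma dl_plus f g x a b : derivable_pt_lim f x a -> derivable_pt_lim g x b ->
  derivable_pt_lim (fun y => f y + g y) x (a + b).
Proof. intros; exact (derivable_pt_lim_plus f g x a b H H0). Qed.
Lemma dl_minus f g x a b : derivable_pt_lim f x a -> derivable_pt_lim g x b ->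
  derivable_pt_lim (fun y => f y - g y) x (a - b).
Proof. intros; exact (derivable_pt_lim_minus f g x a b H H0). Qed.
Lemma dl_mult f g x a b : derivable_pt_lim f x a -> derivable_pt_lim g x b ->
  derivable_pt_lim (fun y => f y * g y) x (a * g x + f x * b).
Proof. intros; exact (derivable_pt_lim_mult f g x a b H H0). Qed.
Lemma dl_const c x : derivable_pt_lim (fun _ => c) x 0.
Proof. apply derivable_pt_lim_const. Qed.
Lemma dl_id x : derivable_pt_lim (fun y => y) x 1.
Proof. apply derivable_pt_lim_id. Qed.
Lemma dl_comp f phi x a b : derivable_pt_lim f x a -> derivable_pt_lim phi (f x) b ->
  derivable_pt_lim (fun y => phi (f y)) x (b * a).
Proof. intros; exact (derivable_pt_lim_comp f phi x a b H H0). Qed.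
Lemma dl_scal c f x a : derivable_pt_lim f x a -> derivable_pt_lim (fun y => c * f y) x (c * a).
Proof. intros H. apply (dl_eq _ _ (0 * f x + c * a)); [apply dl_mult; auto; apply dl_const| ring]. Qed.
Lemma dl_Rinv y : y <> 0 -> derivable_pt_lim Rinv y (- / y ^ 2).
Proof.
  intros H. pose proof (derivable_pt_lim_div (fun _ => 1) (fun z => z) y 0 1 (dl_const 1 y) (dl_id y) H) as D.
  eapply dl_eq. eapply dl_ext; [|exact D]. intros z; unfold div_fct; simpl. unfold Rdiv; ring.
  unfold Rsqr. field. auto.
Qed.

Definition Y2 (g x : R) : R := if Req_EM_T g 0 then x else sinh (g * x) / g.
Definition Y1 (g x : R) : R := cosh (g * x).

Lemma dY2 g x : derivable_pt_lim (Y2 g) x (Y1 g x).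
Proof.
  unfold Y2, Y1. destruct (Req_EM_T g 0) as [E|NE].
  - subst. rewrite Rmult_0_l, cosh_0. apply dl_id.
  - eapply dl_eq. apply (dl_ext (fun y => / g * sinh (g * y))). intros; unfold Rdiv; ring.
    apply dl_scal. apply (dl_comp (fun y => g * y) sinh x g).
    apply (dl_eq _ _ (g * 1)); [apply dl_scal, dl_id| ring]. apply derivable_pt_lim_sinh.
    field; auto.
Qed.

Lemma dY1 g x : derivable_pt_lim (Y1 g) x (g ^ 2 * Y2 g x).
Proof.
  unfold Y2, Y1. eapply dl_eq. apply (dl_comp (fun y => g * y) cosh x g).
  apply (dl_eq _ _ (g * 1)); [apply dl_scal, dl_id| ring]. apply derivable_pt_lim_cosh.
  destruct (Req_EM_T g 0) as [E|NE].
  - subst. ring.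
  - field; auto.
Qed.

Lemma Y2_0 g : Y2 g 0 = 0.
Proof. unfold Y2. destruct Req_EM_T; auto. rewrite Rmult_0_r, sinh_0. unfold Rdiv; ring. Qed.
Lemma Y1_0 g : Y1 g 0 = 1.
Proof. unfold Y1. rewrite Rmult_0_r, cosh_0. auto. Qed.

Lemma Y2_incr g x y : 0 <= g -> x < y -> Y2 g x < Y2 g y.
Proof.
  intros Hg Hxy. unfold Y2. destruct (Req_EM_T g 0) as [E|NE]; auto.
  assert (0 < g) by lra. unfold Rdiv. apply Rmult_lt_compat_r. apply Rinv_0_lt_compat; auto.
  apply sinh_lt. nra.
Qed.

Lemma Y2_pos g x : 0 <= g -> 0 < x -> 0 < Y2 g x.
Proof. intros. rewrite <- (Y2_0 g). apply Y2_incr; auto. Qed.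

Lemma Y2_nonneg g x : 0 <= g -> 0 <= x -> 0 <= Y2 g x.
Proof. intros Hg Hx. destruct (Rle_lt_or_eq_dec _ _ Hx) as [h|h].
  apply Rlt_le, Y2_pos; auto. subst; rewrite Y2_0; lra. Qed.

Lemma Y_add g x : Y1 g (1 - x) * Y2 g x + Y1 g x * Y2 g (1 - x) = Y2 g 1.
Proof.
  unfold Y1, Y2. destruct (Req_EM_T g 0) as [E|NE].
  - subst. rewrite !Rmult_0_l, cosh_0. ring.
  - replace (g * 1) with (g * (1 - x) + g * x) by ring.
    set (u := g * (1 - x)); set (v := g * x).
    unfold sinh, cosh. rewrite Ropp_plus_distr, !exp_plus, !exp_Ropp.
    pose proof (exp_pos u); pose proof (exp_pos v).
    field. repeat split; try lra; auto.
Qed.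

Section YS.
Variables (g ea eb : R).
Definition Yf (x : R) : R := (ea * Y2 g (1 - x) + eb * Y2 g x) / Y2 g 1.
Definition Ypf (x : R) : R := (- ea * Y1 g (1 - x) + eb * Y1 g x) / Y2 g 1.

Lemma d1mx x : derivable_pt_lim (fun y => 1 - y) x (-1).
Proof. apply (dl_eq _ _ (0 - 1)); [apply dl_minus; [apply dl_const| apply dl_id]| ring]. Qed.

Lemma dYf x : derivable_pt_lim Yf x (Ypf x).
Proof.
  unfold Yf, Ypf. eapply dl_eq.
  apply (dl_ext (fun y => / Y2 g 1 * (ea * Y2 g (1 - y) + eb * Y2 g y))). intros; unfold Rdiv; ring.
  apply dl_scal. apply dl_plus; apply dl_scal.
  apply (dl_comp (fun y => 1 - y) (Y2 g)). apply d1mx. apply dY2. apply dY2.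
  unfold Rdiv; ring.
Qed.

Lemma dYpf x : derivable_pt_lim Ypf x (g ^ 2 * Yf x).
Proof.
  unfold Yf, Ypf. eapply dl_eq.
  apply (dl_ext (fun y => / Y2 g 1 * (- ea * Y1 g (1 - y) + eb * Y1 g y))). intros; unfold Rdiv; ring.
  apply dl_scal. apply dl_plus; apply dl_scal.
  apply (dl_comp (fun y => 1 - y) (Y1 g)). apply d1mx. apply dY1. apply dY1.
  unfold Rdiv; ring.
Qed.

Hypothesis (Hg : 0 <= g) (Ha : 0 < ea) (Hb : 0 < eb).

Lemma Y21_pos : 0 < Y2 g 1.
Proof. apply Y2_pos; lra. Qed.

Lemma Yf_0 : Yf 0 = ea.
Proof. unfold Yf. rewrite Y2_0, Rminus_0_r. field. pose proof Y21_pos; lra. Qed.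
Lemma Yf_1 : Yf 1 = eb.
Proof. unfold Yf. rewrite Rminus_diag, Y2_0. field. pose proof Y21_pos; lra. Qed.

Lemma Yf_pos x : I01 x -> 0 < Yf x.
Proof.
  intros [H0 H1]. unfold Yf. pose proof Y21_pos.
  apply Rdiv_lt_0_compat; auto.
  pose proof (Y2_nonneg g (1 - x) Hg ltac:(lra)). pose proof (Y2_nonneg g x Hg H0).
  destruct (Rle_lt_or_eq_dec _ _ H1) as [h|h].
  - pose proof (Y2_pos g (1 - x) Hg ltac:(lra)). nra.
  - subst. nra.
Qed.

Lemma Yf_le x : I01 x -> Yf x <= ea + eb.
Proof.
  intros [H0 H1]. unfold Yf. pose proof Y21_pos.
  apply Rmult_le_reg_r with (Y2 g 1); auto. unfold Rdiv. rewrite Rmult_assoc, Rinv_l by lra.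
  pose proof (Y2_nonneg g (1 - x) Hg ltac:(lra)). pose proof (Y2_nonneg g x Hg H0).
  assert (Y2 g (1 - x) <= Y2 g 1).
  { destruct (Req_dec x 0). subst. rewrite Rminus_0_r; lra. apply Rlt_le, Y2_incr; lra. }
  assert (Y2 g x <= Y2 g 1).
  { destruct (Req_dec x 1). subst; lra. apply Rlt_le, Y2_incr; lra. }
  nra.
Qed.
End YS.

Section KS.
Variables (g ea eb : R).
Hypothesis (Hg : 0 <= g) (Ha : 0 < ea) (Hb : 0 < eb).

Definition iY (t : R) := / Yf g ea eb (clamp t).
Definition Kc (x : R) := RInt iY 0 x.

Lemma iY_pos t : 0 < iY t.
Proof. unfold iY. apply Rinv_0_lt_compat, Yf_pos; auto. apply clamp_I01. Qed.

Lemma iY_ge t : / (ea + eb) <= iY t.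
Proof. unfold iY. apply Rinv_le_contravar. apply Yf_pos; auto; apply clamp_I01.
  apply Yf_le; auto; apply clamp_I01. Qed.

Lemma Yf_cont x : continuity_pt (Yf g ea eb) x.
Proof. apply derivable_continuous_pt. exact (exist _ _ (dYf g ea eb x)). Qed.

Lemma iY_cont x : continuity_pt iY x.
Proof.
  unfold iY. apply (continuity_pt_inv (fun t => Yf g ea eb (clamp t))).
  - apply (continuity_pt_comp clamp (Yf g ea eb) x (clamp_cont x) (Yf_cont _)).
  - pose proof (Yf_pos g ea eb Hg Ha Hb (clamp x) (clamp_I01 x)); lra.
Qed.

Lemma dKc x : derivable_pt_lim Kc x (iY x).
Proof. apply RInt_deriv, iY_cont. Qed.

Lemma Kc_0 : Kc 0 = 0.
Proof. unfold Kc. rewrite RInt_point. reflexivity. Qed.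

Definition J := Kc 1.

Lemma J_pos : 0 < J.
Proof. unfold J. rewrite <- Kc_0. apply (incr_glob Kc iY dKc iY_pos). lra. Qed.

Lemma Kc_lin x : (0 <= x -> x / (ea + eb) <= Kc x) /\ (x <= 0 -> Kc x <= x / (ea + eb)).
Proof.
  destruct (MVT_gen Kc 0 x iY) as [c [_ E]].
  - intros z _. apply is_derive_Reals, dKc.
  - intros z _. apply derivable_continuous_pt. exact (exist _ _ (dKc z)).
  - rewrite Kc_0 in E. pose proof (iY_ge c). unfold Rdiv.
    assert (0 < ea + eb) by lra.
    split; intros; nra.
Qed.

Definition FK (x : R) := Kc x / J.

Lemma dFK x : derivable_pt_lim FK x (iY x / J).
Proof. unfold FK. eapply dl_eq. eapply dl_ext; [|apply (dl_scal (/ J) Kc x _ (dKc x))].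
  intros; unfold Rdiv; ring. unfold Rdiv; ring. Qed.

Lemma FK_surj r : exists x, FK x = r.
Proof.
  pose proof J_pos as HJ.
  set (M := (Rabs r + 1) * J * (ea + eb)).
  assert (HM : 0 < M) by (unfold M; pose proof (Rabs_pos r); apply Rmult_lt_0_compat; [nra|lra]).
  destruct (IVT_gen FK (- M) M r) as [x [_ Hx]].
  - intros z. apply derivable_continuous_pt.
    exact (exist _ _ (dFK z)).
  - destruct (Kc_lin (-M)) as [_ H1]. destruct (Kc_lin M) as [H2 _].
    specialize (H1 ltac:(lra)). specialize (H2 ltac:(lra)).
    assert (FK (- M) <= - (Rabs r + 1)).
    { unfold FK. apply Rmult_le_reg_r with J; auto. unfold Rdiv. rewrite Rmult_assoc, Rinv_l by lra.
      replace (- M / (ea + eb)) with (- (Rabs r + 1) * J) in H1 by (unfold M; field; lra). lra. }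
    assert (Rabs r + 1 <= FK M).
    { unfold FK. apply Rmult_le_reg_r with J; auto. unfold Rdiv. rewrite Rmult_assoc, Rinv_l by lra.
      replace (M / (ea + eb)) with ((Rabs r + 1) * J) in H2 by (unfold M; field; lra). lra. }
    pose proof (Rle_abs r). pose proof (Rle_abs (-r)). rewrite Rabs_Ropp in *.
    split. apply Rle_trans with (FK (-M)). apply Rmin_l. lra.
    apply Rle_trans with (FK M). lra. apply Rmax_r.
  - exists x; auto.
Qed.

Lemma s_exists : exists s : R -> R, forall r, FK (s r) = r.
Proof.
  exists (fun r => proj1_sig (constructive_indefinite_description _ (FK_surj r))).
  intros r. exact (proj2_sig (constructive_indefinite_description _ (FK_surj r))).
Qed.

Lemma FK_incr x y : x < y -> FK x < FK y.
Proof. apply (incr_glob FK (fun x => iY x / J) dFK). intros; pose proof J_pos;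
  apply Rdiv_lt_0_compat; auto; apply iY_pos. Qed.

Lemma FK_inj x y : FK x = FK y -> x = y.
Proof. intros E. destruct (Rtotal_order x y) as [h|[h|h]]; auto;
  apply FK_incr in h; lra. Qed.

Lemma FK_0 : FK 0 = 0.
Proof. unfold FK; rewrite Kc_0; unfold Rdiv; ring. Qed.
Lemma FK_1 : FK 1 = 1.
Proof. unfold FK. fold J. field. pose proof J_pos; lra. Qed.

Section S.
Variable s : R -> R.
Hypothesis Hs : forall r, FK (s r) = r.

Lemma s_0 : s 0 = 0.
Proof. apply FK_inj. rewrite Hs, FK_0; auto. Qed.
Lemma s_1 : s 1 = 1.
Proof. apply FK_inj. rewrite Hs, FK_1; auto. Qed.
Lemma s_le x y : x <= y -> s x <= s y.
Proof. intros H. destruct (Rle_lt_dec (s x) (s y)) as [h|h]; auto.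
  apply FK_incr in h. rewrite !Hs in h. lra. Qed.
Lemma s_I01 r : I01 r -> I01 (s r).
Proof. intros [H0 H1]. unfold I01. rewrite <- s_0, <- s_1. split; apply s_le; auto. Qed.
Lemma ds r : derivable_pt_lim s r (J * Yf g ea eb (clamp (s r))).
Proof.
  eapply dl_eq. apply (inv_deriv FK (fun x => iY x / J) s dFK); auto.
  intros; pose proof J_pos; apply Rdiv_lt_0_compat; auto; apply iY_pos.
  unfold iY. pose proof J_pos. pose proof (Yf_pos g ea eb Hg Ha Hb (clamp (s r)) (clamp_I01 _)).
  field. lra.
Qed.
Lemma ds01 r : I01 r -> derivable_pt_lim s r (J * Yf g ea eb (s r)).
Proof. intros H. replace (Yf g ea eb (s r)) with (Yf g ea eb (clamp (s r))). apply ds. rewrite clamp_id; auto. apply s_I01; auto. Qed.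
End S.
End KS.

Lemma sumd_ext d F G : (1 <= d)%nat -> (forall k, (k < d)%nat -> F k = G k) -> sumd d F = sumd d G.
Proof. intros Hd H. unfold sumd. apply sum_eq. intros; apply H; lia. Qed.
Lemma sumd_plus d F G : sumd d (fun k => F k + G k) = sumd d F + sumd d G.
Proof. unfold sumd. apply plus_sum. Qed.
Lemma sumd_minus d F G : sumd d (fun k => F k - G k) = sumd d F - sumd d G.
Proof. unfold sumd. apply minus_sum. Qed.
Lemma sumd_scal d c F : sumd d (fun k => c * F k) = c * sumd d F.
Proof. unfold sumd. rewrite scal_sum. apply sum_eq; intros; ring. Qed.
Lemma sumd_const d c : (1 <= d)%nat -> sumd d (fun _ => c) = INR d * c.
Proof. intros Hd. unfold sumd. rewrite sum_cte. replace (S (pred d)) with d by lia. ring. Qed.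

Lemma cp_plus f g x : continuity_pt f x -> continuity_pt g x -> continuity_pt (fun y => f y + g y) x.
Proof. intros; exact (continuity_pt_plus f g x H H0). Qed.
Lemma cp_mult f g x : continuity_pt f x -> continuity_pt g x -> continuity_pt (fun y => f y * g y) x.
Proof. intros; exact (continuity_pt_mult f g x H H0). Qed.
Lemma cp_const c x : continuity_pt (fun _ => c) x.
Proof. apply continuity_pt_const. intros a b; auto. Qed.
Lemma cp_der f x l : derivable_pt_lim f x l -> continuity_pt f x.
Proof. intros H. apply derivable_continuous_pt. exact (exist _ l H). Qed.
Lemma cp_comp f phi x : continuity_pt f x -> continuity_pt phi (f x) -> continuity_pt (fun y => phi (f y)) x.
Proof. intros; exact (continuity_pt_comp f phi x H H0). Qed.

Lemma dl_hd f f' : (forall x, I01 x -> derivable_pt_lim f x (f' x)) -> has_deriv_01 f f'.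
Proof.
  intros H x Hx P [e He].
  destruct (H x Hx e (cond_pos e)) as [d Hd].
  exists d. intros h Hh [NZ Hi]. apply He.
  unfold ball in *; simpl in *; unfold AbsRing_ball, abs, minus, plus, opp in *; simpl in *.
  apply Hd; auto. replace h with (h + - 0) by ring. exact Hh.
Qed.

Lemma cp_c01 f : (forall x, I01 x -> continuity_pt f x) -> cont_01 f.
Proof.
  intros H x Hx P [e He]. destruct (H x Hx e (cond_pos e)) as [d [Hd Hd']].
  exists (mkposreal d Hd). intros y Hy Hi. apply He.
  unfold ball in *; simpl in *; unfold AbsRing_ball, abs, minus, plus, opp in *; simpl in *.
  destruct (Req_dec y x) as [E|NE]. subst. replace (f x + - f x) with 0 by ring. rewrite Rabs_R0; apply cond_pos.
  apply Hd'. split. split. exact I. auto. simpl; unfold R_dist. exact Hy.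
Qed.
Lemma cp_ext f g x : (forall y, f y = g y) -> continuity_pt f x -> continuity_pt g x.
Proof. intros E H. apply (continuity_pt_ext f g x E H). Qed.

Definition LA d (a : nat -> R) := sumd d (fun k => ln (a k)).
Definition bet d (a b : nat -> R) i := ln (b i) - ln (a i) - (LA d b - LA d a) / INR d.
Definition gam d a b := sqrt (INR d * sumd d (fun i => bet d a b i ^ 2) / (INR d - 1)).
Definition ex d a := exp (- LA d a).

Section Exist.
Variables (d : nat) (a b : nat -> R).
Hypothesis (Hd : (2 <= d)%nat) (Ha : forall i, (i < d)%nat -> 0 < a i)
  (Hb : forall i, (i < d)%nat -> 0 < b i).
Let gm := gam d a b.
Let ea := ex d a.
Let eb := ex d b.
Let Y := Yf gm ea eb.
Let Yp := Ypf gm ea eb.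
Let JJ : R := J gm ea eb.
Variable s : R -> R.
Hypothesis Hs : forall r, FK gm ea eb (s r) = r.

Lemma gm_nn : 0 <= gm.
Proof. apply sqrt_pos. Qed.
Lemma ea_pos : 0 < ea. Proof. apply exp_pos. Qed.
Lemma eb_pos : 0 < eb. Proof. apply exp_pos. Qed.
Lemma dR : 2 <= INR d.
Proof. replace 2 with (INR 2) by (simpl; ring). apply le_INR; auto. Qed.

Lemma gm_sq : gm ^ 2 * (INR d - 1) = INR d * sumd d (fun i => bet d a b i ^ 2).
Proof.
  pose proof dR. unfold gm, gam. rewrite <- Rsqr_pow2, Rsqr_sqrt. field. lra.
  apply Rmult_le_pos. apply Rmult_le_pos. lra.
  unfold sumd. apply cond_pos_sum. intros; apply pow2_ge_0.
  apply Rlt_le, Rinv_0_lt_compat; lra.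
Qed.

Lemma sum_bet : sumd d (bet d a b) = 0.
Proof.
  pose proof dR. unfold bet.
  rewrite sumd_minus, sumd_minus, sumd_const by lia. unfold LA. field. lra.
Qed.

Definition lamf := JJ ^ 2 * (gm ^ 2 * ea ^ 2 - Yp 0 ^ 2) / INR d.
Definition ff i r := exp (ln (a i) - (ln (Y (s r)) + LA d a) / INR d + bet d a b i * s r).
Definition ph1 i r := JJ * (- Yp (s r) / INR d + bet d a b i * Y (s r)).
Definition ph2 i r := JJ ^ 2 * Y (s r) * (- gm ^ 2 * Y (s r) / INR d + bet d a b i * Yp (s r)).
Definition ff1 i r := ff i r * ph1 i r.
Definition ff2 i r := ff i r * (ph1 i r ^ 2 + ph2 i r).

Lemma Ys_pos r : I01 r -> 0 < Y (s r).
Proof. intros H. apply Yf_pos; [apply gm_nn|apply ea_pos|apply eb_pos|]. apply s_I01 with (g:=gm) (ea:=ea) (eb:=eb); auto.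
  apply gm_nn. apply ea_pos. apply eb_pos. Qed.

Lemma dsY r : I01 r -> derivable_pt_lim s r (JJ * Y (s r)).
Proof. intros H. apply ds01; auto. apply gm_nn. apply ea_pos. apply eb_pos. Qed.

Lemma dYs r : I01 r -> derivable_pt_lim (fun x => Y (s x)) r (Yp (s r) * (JJ * Y (s r))).
Proof. intros H. apply (dl_comp s Y). apply dsY; auto. apply dYf. Qed.

Lemma dYps r : I01 r -> derivable_pt_lim (fun x => Yp (s x)) r (gm ^ 2 * Y (s r) * (JJ * Y (s r))).
Proof. intros H. apply (dl_comp s Yp). apply dsY; auto. apply dYpf. Qed.

Lemma dff i r : I01 r -> derivable_pt_lim (ff i) r (ff1 i r).
Proof.
  intros H. pose proof dR. pose proof (Ys_pos r H).
  unfold ff, ff1. eapply dl_eq. apply (dl_comp (fun x => ln (a i) - (ln (Y (s x)) + LA d a) / INR d + bet d a b i * s x) exp).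
  - apply dl_plus. apply dl_minus. apply dl_const.
    apply (dl_ext (fun x => / INR d * (ln (Y (s x)) + LA d a))). intros; unfold Rdiv; ring.
    apply dl_scal. apply dl_plus. apply (dl_comp (fun x => Y (s x)) ln). apply dYs; auto.
    apply derivable_pt_lim_ln; auto. apply dl_const. apply dl_scal. apply dsY; auto.
  - apply derivable_pt_lim_exp.
  - unfold ph1, ff. field. split; lra.
Qed.

Lemma dph1 i r : I01 r -> derivable_pt_lim (ph1 i) r (ph2 i r).
Proof.
  intros H. pose proof dR. unfold ph1, ph2. eapply dl_eq.
  apply dl_scal. apply dl_plus.
  apply (dl_ext (fun x => (- / INR d) * Yp (s x))). intros; unfold Rdiv; ring.
  apply dl_scal. apply dYps; auto.
  apply dl_scal. apply dYs; auto.
  field. lra.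
Qed.

Lemma dff1 i r : I01 r -> derivable_pt_lim (ff1 i) r (ff2 i r).
Proof.
  intros H. unfold ff1 at 1. eapply dl_eq. apply dl_mult. apply dff; auto. apply dph1; auto.
  unfold ff2, ff1. ring.
Qed.

Lemma cs r : continuity_pt s r.
Proof. apply (cp_der s r _ (ds gm ea eb gm_nn ea_pos eb_pos s Hs r)). Qed.

Lemma cont_ff2 i : cont_01 (ff2 i).
Proof.
  apply cp_c01. intros r H.
  assert (CY : continuity_pt (fun x => Y (s x)) r) by (apply (cp_der _ _ _ (dYs r H))).
  assert (CYp : continuity_pt (fun x => Yp (s x)) r) by (apply (cp_der _ _ _ (dYps r H))).
  assert (Cf : continuity_pt (ff i) r) by (apply (cp_der _ _ _ (dff i r H))).
  assert (Cp : continuity_pt (ph1 i) r) by (apply (cp_der _ _ _ (dph1 i r H))).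
  unfold ff2. apply cp_mult; auto. apply cp_plus.
  - apply (cp_comp (ph1 i) (fun y => y ^ 2)); auto. apply (cp_der _ _ _ (derivable_pt_lim_pow _ 2)).
  - unfold ph2. apply cp_mult; [apply cp_mult; [apply cp_const| exact CY]|]. apply cp_plus.
    + apply (cp_ext (fun x => (- gm ^ 2 / INR d) * Y (s x))). intros; unfold Rdiv; ring.
      apply cp_mult; [apply cp_const| exact CY].
    + apply cp_mult; [apply cp_const| exact CYp].
Qed.

Lemma conserv x : I01 x -> gm ^ 2 * Y x ^ 2 - Yp x ^ 2 = gm ^ 2 * ea ^ 2 - Yp 0 ^ 2.
Proof.
  intros H. rewrite <- (Yf_0 gm ea eb gm_nn). fold Y.
  apply (const01 (fun x => gm ^ 2 * Y x ^ 2 - Yp x ^ 2) (fun x => 0)); auto.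
  apply D01_glob. intros y _. eapply dl_eq. apply dl_minus. apply dl_scal.
  apply (dl_comp Y (fun z => z ^ 2)). apply dYf. apply derivable_pt_lim_pow.
  apply (dl_comp Yp (fun z => z ^ 2)). apply dYpf. apply derivable_pt_lim_pow.
  simpl. fold Y Yp. ring.
Qed.

Lemma sumS r : sumd d (fun k => ph1 k r) = - JJ * Yp (s r).
Proof.
  pose proof dR. unfold ph1.
  rewrite (sumd_ext d _ (fun k => - JJ * Yp (s r) / INR d + JJ * Y (s r) * bet d a b k)) by (try lia; intros; field; lra).
  rewrite sumd_plus, sumd_const, sumd_scal, sum_bet by lia. field. lra.
Qed.

Lemma ff_pos i r : 0 < ff i r.
Proof. apply exp_pos. Qed.

Theorem exist_sol : is_solution d a b lamf ff.
Proof.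
  pose proof dR as HdR.
  assert (Q1 : forall i r, ff1 i r / ff i r = ph1 i r).
  { intros; unfold ff1; field. pose proof (ff_pos i r); lra. }
  assert (Q2 : forall i r, ff2 i r / ff i r = ph1 i r ^ 2 + ph2 i r).
  { intros; unfold ff2; field. pose proof (ff_pos i r); lra. }
  assert (s0 : s 0 = 0) by (apply (s_0 gm ea eb gm_nn ea_pos eb_pos s Hs)).
  assert (s1 : s 1 = 1) by (apply (s_1 gm ea eb gm_nn ea_pos eb_pos s Hs)).
  assert (Y0 : Y 0 = ea) by (apply Yf_0, gm_nn).
  assert (Y1 : Y 1 = eb) by (apply Yf_1, gm_nn).
  exists ff1, ff2. split; [|split; [|split]].
  - intros i Hi. split; [|split; [|split]].
    + apply dl_hd. intros; apply dff; auto.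
    + apply dl_hd. intros; apply dff1; auto.
    + apply cont_ff2.
    + intros; apply ff_pos.
  - assert (S0 : sumd d (fun k => ff1 k 0 / ff k 0) = sumd d (fun k => ph1 k 0)).
    { apply sumd_ext. lia. intros; apply Q1. }
    rewrite S0.
    rewrite (sumd_ext d _ (fun i => - (ph1 i 0 * sumd d (fun k => ph1 k 0)) + ph1 i 0 ^ 2)) by
      (try lia; intros; rewrite !Q1; ring).
    rewrite sumS. unfold ph1. rewrite s0, Y0.
    set (p0 := Yp 0). set (cc := - JJ * p0).
    rewrite (sumd_ext d _ (fun i => (- (JJ * (- p0 / INR d)) * cc + JJ ^ 2 * p0 ^ 2 / INR d ^ 2)
       + ((- JJ * ea * cc - 2 * JJ ^ 2 * p0 * ea / INR d) * bet d a b i + (JJ ^ 2 * ea ^ 2) * bet d a b i ^ 2)))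
      by (try lia; intros; field; lra).
    rewrite sumd_plus, sumd_const, sumd_plus, sumd_scal, sumd_scal, sum_bet by lia.
    unfold lamf. fold p0.
    assert (E : sumd d (fun i => bet d a b i ^ 2) = gm ^ 2 * (INR d - 1) / INR d).
    { rewrite gm_sq. field. lra. }
    rewrite E. unfold cc. rewrite minus_INR by lia. simpl (INR 1). field. lra.
  - intros i r Hi Hr. rewrite !Q1, Q2.
    rewrite (sumd_ext d (fun k => ff1 k r / ff k r) (fun k => ph1 k r)) by (try lia; intros; apply Q1).
    rewrite sumS. unfold ph1, ph2, lamf.
    pose proof (conserv (s r) (s_I01 gm ea eb gm_nn ea_pos eb_pos s Hs r Hr)) as C.
    transitivity (JJ ^ 2 * (gm ^ 2 * Y (s r) ^ 2 - Yp (s r) ^ 2) / INR d).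
    field; lra. rewrite C. reflexivity.
  - intros i Hi. unfold ff. split.
    + rewrite s0, Y0. unfold ea, ex. rewrite ln_exp.
      replace (ln (a i) - (- LA d a + LA d a) / INR d + bet d a b i * 0) with (ln (a i)) by (field; lra).
      apply exp_ln, Ha, Hi.
    + rewrite s1, Y1. unfold eb, ex. rewrite ln_exp. unfold bet.
      replace (ln (a i) - (- LA d b + LA d a) / INR d + (ln (b i) - ln (a i) - (LA d b - LA d a) / INR d) * 1)
        with (ln (b i)) by (field; lra).
      apply exp_ln, Hb, Hi.
Qed.
End Exist.

Lemma CC_all h : CC h -> forall x, continuity_pt (fun t => h (clamp t)) x.
Proof.
  intros H x.
  pose proof (continuity_pt_comp clamp (fun t => h (clamp t)) x (clamp_cont x) (H (clamp x) (clamp_I01 x))) as C.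
  eapply cp_ext; [|exact C]. intros y. unfold comp. rewrite (clamp_id (clamp y)); auto. apply clamp_I01.
Qed.

Section Uniq.
Variables (d : nat) (a b : nat -> R).
Hypothesis (Hd : (2 <= d)%nat) (Ha : forall i, (i < d)%nat -> 0 < a i)
  (Hb : forall i, (i < d)%nat -> 0 < b i).
Let gm := gam d a b.
Let ea := ex d a.
Let eb := ex d b.
Let Y := Yf gm ea eb.
Let Yp := Ypf gm ea eb.
Let JJ : R := J gm ea eb.
Variable s : R -> R.
Hypothesis Hs : forall r, FK gm ea eb (s r) = r.

Variables (lam : R) (g g1 g2 : nat -> R -> R).
Hypothesis HD : forall i, (i < d)%nat -> has_deriv_01 (g i) (g1 i) /\ has_deriv_01 (g1 i) (g2 i) /\
   cont_01 (g2 i) /\ (forall r, I01 r -> 0 < g i r).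
Hypothesis HC : sumd d (fun i => - (g1 i 0 / g i 0) * sumd d (fun k => g1 k 0 / g k 0)
                     + (g1 i 0 / g i 0) ^ 2) = INR (d - 1) * lam.
Hypothesis HE : forall i r, (i < d)%nat -> I01 r ->
       - (g1 i r / g i r) * sumd d (fun k => g1 k r / g k r)
       + (g1 i r / g i r) ^ 2 - g2 i r / g i r = lam.
Hypothesis HB : forall i, (i < d)%nat -> g i 0 = a i /\ g i 1 = b i.

Let p i r := g1 i r / g i r.
Let S r := sumd d (fun k => p k r).
Let L r := sumd d (fun k => ln (g k r)).
Let v r := exp (- L r).

Lemma dR' : 2 <= INR d.
Proof. replace 2 with (INR 2) by (simpl; ring). apply le_INR; auto. Qed.

Lemma gpos i r : (i < d)%nat -> I01 r -> 0 < g i r.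
Proof. intros Hi Hr. apply (HD i Hi); auto. Qed.

Lemma D_p i : (i < d)%nat -> D01 (p i) (fun r => - lam - p i r * S r).
Proof.
  intros Hi. destruct (HD i Hi) as [H1 [H2 [_ H4]]].
  pose proof (D01_mult _ _ _ _ (hd_D01 _ _ H2) (D01_comp (g i) (g1 i) Rinv (fun y => - / y ^ 2) (fun y => 0 < y)
     (hd_D01 _ _ H1) H4 (fun y Hy => dl_Rinv y ltac:(lra)))) as D.
  eapply D01_ext. exact D.
  - intros; unfold p; reflexivity.
  - intros x Hx. assert (Hx' : I01 x) by (unfold I01; lra).
    pose proof (HE i x Hi Hx') as E. pose proof (H4 x Hx').
    unfold S, p. unfold p in E. rewrite <- E. field. lra.
Qed.

Lemma D_S : D01 S (fun r => - INR d * lam - S r * S r).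
Proof.
  pose proof (D01_sum (fun k r => p k r) (fun k r => - lam - p k r * S r) (pred d)
     (fun k Hk => D_p k ltac:(lia))) as H.
  eapply D01_ext; [exact H| intros; reflexivity |]. intros x Hx.
  change (sumd d (fun k => - lam - p k x * S x) = - INR d * lam - S x * S x).
  rewrite (sumd_ext d _ (fun k => (- lam) + (- S x) * p k x)) by (try lia; intros; ring).
  rewrite sumd_plus, sumd_const, sumd_scal by lia. unfold S. ring.
Qed.

Lemma D_lng i : (i < d)%nat -> D01 (fun r => ln (g i r)) (p i).
Proof.
  intros Hi. destruct (HD i Hi) as [H1 [H2 [_ H4]]].
  eapply D01_ext. apply (D01_comp (g i) (g1 i) ln Rinv (fun y => 0 < y) (hd_D01 _ _ H1) H4).
  intros; apply derivable_pt_lim_ln; auto.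
  intros; reflexivity. intros; unfold p; field. apply Rgt_not_eq, H4. unfold I01; lra.
Qed.

Lemma D_L : D01 L S.
Proof.
  pose proof (D01_sum (fun k r => ln (g k r)) p (pred d) (fun k Hk => D_lng k ltac:(lia))) as H.
  eapply D01_ext; [exact H| intros; reflexivity | intros; reflexivity].
Qed.

Lemma D_v : D01 v (fun r => - S r * v r).
Proof.
  assert (H : D01 (fun r => - L r) (fun r => - S r)).
  { eapply D01_ext. apply (D01_minus _ _ _ _ (D01_const 0) D_L). intros; cbv beta; ring. intros; cbv beta; ring. }
  eapply D01_ext. apply (D01_comp _ _ exp exp (fun _ => True) H). auto.
  intros; apply derivable_pt_lim_exp. intros; reflexivity. intros; unfold v; cbv beta; ring.
Qed.

Lemma v_pos r : 0 < v r.
Proof. apply exp_pos. Qed.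

Let Qf r := sumd d (fun k => p k r ^ 2) - S r ^ 2.

Lemma Q_const r : I01 r -> Qf r = (INR d - 1) * lam.
Proof.
  intros Hr. pose proof dR' as HdR. set (c := (INR d - 1) * lam).
  assert (D2L : D01 (fun r => 2 * L r) (fun r => 2 * S r)).
  { eapply D01_ext. apply (D01_mult _ _ _ _ (D01_const 2) D_L). intros; cbv beta; ring. intros; cbv beta; ring. }
  assert (De : D01 (fun r => exp (2 * L r)) (fun r => exp (2 * L r) * (2 * S r))).
  { eapply D01_ext. apply (D01_comp _ _ exp exp (fun _ => True) D2L). auto.
    intros; apply derivable_pt_lim_exp. intros; reflexivity. intros; reflexivity. }
  assert (Dp2 : D01 (fun r => sumd d (fun k => p k r ^ 2))
            (fun r => sumd d (fun k => 2 * p k r * (- lam - p k r * S r)))).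
  { pose proof (D01_sum (fun k r => p k r ^ 2) (fun k r => 2 * p k r * (- lam - p k r * S r)) (pred d)) as H.
    apply H. intros k Hk. eapply D01_ext. apply (D01_mult _ _ _ _ (D_p k ltac:(lia)) (D_p k ltac:(lia))).
    intros; cbv beta; ring. intros; cbv beta; ring. }
  assert (DQ : D01 Qf (fun r => sumd d (fun k => 2 * p k r * (- lam - p k r * S r))
                                - 2 * S r * (- INR d * lam - S r * S r))).
  { eapply D01_ext. apply (D01_minus _ _ _ _ Dp2 (D01_mult _ _ _ _ D_S D_S)).
    intros; unfold Qf; ring. intros; cbv beta; ring. }
  assert (Dh := D01_mult _ _ _ _ (D01_minus _ _ _ _ DQ (D01_const c)) De).
  pose proof (const01 _ _ Dh) as K.
  assert (E1 : sumd d (fun i => - (g1 i 0 / g i 0) * sumd d (fun k => g1 k 0 / g k 0) + (g1 i 0 / g i 0) ^ 2)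
      = - S 0 * S 0 + sumd d (fun k => p k 0 ^ 2)).
  { rewrite (sumd_ext d (fun i => - (g1 i 0 / g i 0) * sumd d (fun k => g1 k 0 / g k 0) + (g1 i 0 / g i 0) ^ 2)
       (fun i => (- S 0) * p i 0 + p i 0 ^ 2)).
    rewrite sumd_plus, sumd_scal. unfold S. ring. lia. intros; unfold S, p; ring. }
  assert (Q0 : Qf 0 = c).
  { unfold Qf, c. assert (HC' := HC). rewrite minus_INR in HC' by lia. simpl (INR 1) in HC'.
    rewrite <- HC', E1. ring. }
  assert (Z : (Qf r - c) * exp (2 * L r) = 0).
  { rewrite K; auto. rewrite Q0. ring. intros x Hx.
    rewrite (sumd_ext d _ (fun k => (- 2 * lam) * p k x + (- 2 * S x) * p k x ^ 2)) by (try lia; intros; ring).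
    rewrite sumd_plus, !sumd_scal. unfold Qf, c. fold (S x). ring. }
  pose proof (exp_pos (2 * L r)).
  apply Rmult_integral in Z. destruct Z; lra.
Qed.

Let q i r := p i r - S r / INR d.
Let e i := q i 0 * exp (L 0).

Lemma D_eL : D01 (fun r => exp (L r)) (fun r => exp (L r) * S r).
Proof.
  eapply D01_ext. apply (D01_comp _ _ exp exp (fun _ => True) D_L). auto.
  intros; apply derivable_pt_lim_exp. intros; reflexivity. intros; reflexivity.
Qed.

Lemma D_Sd : D01 (fun r => S r / INR d) (fun r => (- INR d * lam - S r * S r) / INR d).
Proof.
  eapply D01_ext. apply (D01_mult _ _ _ _ D_S (D01_const (/ INR d))).
  intros; cbv beta; unfold Rdiv; ring. intros; cbv beta; unfold Rdiv; ring.
Qed.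

Lemma q_eq i r : (i < d)%nat -> I01 r -> q i r = e i * v r.
Proof.
  intros Hi Hr. pose proof dR' as HdR.
  assert (D := D01_mult _ _ _ _ (D01_minus _ _ _ _ (D_p i Hi) D_Sd) D_eL).
  pose proof (const01 _ _ D) as K.
  assert (E : q i r * exp (L r) = e i).
  { unfold e, q. rewrite K; auto. intros x Hx. field. lra. }
  unfold v. rewrite exp_Ropp, <- E. field. pose proof (exp_pos (L r)); lra.
Qed.

Let vc t := v (clamp t).
Let tau r := RInt vc 0 r.

Lemma vc_cont x : continuity_pt vc x.
Proof. apply (CC_all v (D01_CC _ _ D_v)). Qed.

Lemma dtau x : derivable_pt_lim tau x (vc x).
Proof. apply (RInt_deriv vc vc_cont). Qed.

Lemma D_tau : D01 tau v.
Proof. apply D01_glob. intros x Hx. eapply dl_eq. apply dtau. unfold vc. rewrite clamp_id; auto. Qed.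

Lemma tau0 : tau 0 = 0.
Proof. unfold tau. rewrite RInt_point. reflexivity. Qed.

Let T := tau 1.

Lemma T_pos : 0 < T.
Proof. unfold T. rewrite <- tau0. apply (mono01 tau v 0 1 D_tau); try lra. intros; apply v_pos. Qed.

Lemma L0 : L 0 = LA d a.
Proof. unfold L, LA. apply sumd_ext. lia. intros k Hk. rewrite (proj1 (HB k Hk)). reflexivity. Qed.
Lemma L1 : L 1 = LA d b.
Proof. unfold L, LA. apply sumd_ext. lia. intros k Hk. rewrite (proj2 (HB k Hk)). reflexivity. Qed.

Lemma lng_eq i r : (i < d)%nat -> I01 r ->
  ln (g i r) = ln (a i) - LA d a / INR d + L r / INR d + e i * tau r.
Proof.
  intros Hi Hr. pose proof dR' as HdR.
  assert (DLd : D01 (fun r => L r / INR d) (fun r => S r / INR d)).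
  { eapply D01_ext. apply (D01_mult _ _ _ _ D_L (D01_const (/ INR d))).
    intros; cbv beta; unfold Rdiv; ring. intros; cbv beta; unfold Rdiv; ring. }
  assert (D := D01_minus _ _ _ _ (D01_minus _ _ _ _ (D_lng i Hi) DLd) (D01_mult _ _ _ _ (D01_const (e i)) D_tau)).
  pose proof (const01 _ _ D) as K.
  assert (Z : forall x, 0 < x < 1 -> p i x - S x / INR d - (0 * tau x + e i * v x) = 0).
  { intros x Hx. rewrite <- q_eq; auto. unfold q. ring. unfold I01; lra. }
  specialize (K Z r Hr). cbv beta in K. rewrite tau0, L0, (proj1 (HB i Hi)) in K.
  lra.
Qed.

Lemma eT i : (i < d)%nat -> e i * T = bet d a b i.
Proof.
  intros Hi. pose proof (lng_eq i 1 Hi (conj Rle_0_1 (Rle_refl 1))) as E.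
  rewrite L1, (proj2 (HB i Hi)) in E. unfold bet. fold T in E. pose proof dR'.
  rewrite E. field. lra.
Qed.

Lemma key r : I01 r -> T ^ 2 * (S r ^ 2 + INR d * lam) = gm ^ 2 * v r ^ 2.
Proof.
  intros Hr. pose proof dR' as HdR.
  assert (E1 : sumd d (fun i => T ^ 2 * (p i r - S r / INR d) ^ 2) = sumd d (fun i => v r ^ 2 * bet d a b i ^ 2)).
  { apply sumd_ext. lia. intros i Hi. fold (q i r). rewrite q_eq by auto. rewrite <- eT by auto. ring. }
  rewrite (sumd_ext d (fun i => T ^ 2 * (p i r - S r / INR d) ^ 2)
     (fun i => (T ^ 2 * (S r / INR d) ^ 2) + ((- 2 * T ^ 2 * S r / INR d) * p i r + T ^ 2 * p i r ^ 2))) in E1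
     by (try lia; intros; field; lra).
  rewrite sumd_plus, sumd_plus, sumd_const, sumd_scal, sumd_scal, sumd_scal in E1 by lia.
  pose proof (gm_sq d a b Hd) as G. fold gm in G.
  pose proof (Q_const r Hr) as Q. unfold Qf in Q. fold (S r) in E1.
  assert (Ev : sumd d (fun i => bet d a b i ^ 2) = gm ^ 2 * (INR d - 1) / INR d) by (rewrite G; field; lra).
  rewrite Ev in E1.
  assert (Hs2 : sumd d (fun k => p k r ^ 2) = (INR d - 1) * lam + S r ^ 2) by lra.
  rewrite Hs2 in E1.
  apply (Rmult_eq_reg_r ((INR d - 1) / INR d)). 2:{ apply Rgt_not_eq, Rdiv_lt_0_compat; lra. }
  transitivity (INR d * (T ^ 2 * (S r / INR d) ^ 2) + (- 2 * T ^ 2 * S r / INR d * S r + T ^ 2 * ((INR d - 1) * lam + S r ^ 2))).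
  field; lra. rewrite E1. field. lra.
Qed.

Let sg r := tau r / T.
Let w r := - T * S r.
Let Y21 := Y2 gm 1.
Lemma gm_nn' : 0 <= gm. Proof. apply sqrt_pos. Qed.
Lemma Y21p : 0 < Y21. Proof. apply Y21_pos, gm_nn'. Qed.

Lemma D_sg : D01 sg (fun r => v r / T).
Proof.
  eapply D01_ext. apply (D01_mult _ _ _ _ D_tau (D01_const (/ T))).
  intros; cbv beta; unfold sg, Rdiv; ring. intros; cbv beta; unfold Rdiv; ring.
Qed.

Lemma D_w : D01 w (fun r => - T * (- INR d * lam - S r * S r)).
Proof.
  eapply D01_ext. apply (D01_mult _ _ _ _ (D01_const (- T)) D_S).
  intros; cbv beta; unfold w; ring. intros; cbv beta; ring.
Qed.

Lemma W_const F Fp : (forall x, derivable_pt_lim F x (Fp x)) ->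
  (forall x, derivable_pt_lim Fp x (gm ^ 2 * F x)) ->
  forall r, I01 r -> v r * Fp (sg r) - w r * F (sg r) = v 0 * Fp (sg 0) - w 0 * F (sg 0).
Proof.
  intros dF dFp.
  assert (DF := D01_comp sg _ F Fp (fun _ => True) D_sg (fun _ _ => I) (fun y _ => dF y)).
  assert (DFp := D01_comp sg _ Fp (fun x => gm ^ 2 * F x) (fun _ => True) D_sg (fun _ _ => I) (fun y _ => dFp y)).
  assert (D := D01_minus _ _ _ _ (D01_mult _ _ _ _ D_v DFp) (D01_mult _ _ _ _ D_w DF)).
  apply (const01 _ _ D). intros x Hx. cbv beta.
  pose proof (key x ltac:(unfold I01; lra)) as K. pose proof T_pos.
  transitivity (F (sg x) / T * (gm ^ 2 * v x ^ 2 - T ^ 2 * (S x ^ 2 + INR d * lam))).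
  unfold w. field. lra. rewrite K. ring.
Qed.

Lemma v0 : v 0 = ea.
Proof. unfold v. rewrite L0. reflexivity. Qed.
Lemma v1 : v 1 = eb.
Proof. unfold v. rewrite L1. reflexivity. Qed.
Lemma sg0 : sg 0 = 0.
Proof. unfold sg. rewrite tau0. unfold Rdiv; ring. Qed.
Lemma sg1 : sg 1 = 1.
Proof. unfold sg. fold T. field. pose proof T_pos; lra. Qed.

Lemma dVf x : derivable_pt_lim (fun x => Y2 gm x / Y21) x (Y1 gm x / Y21).
Proof. eapply dl_eq. eapply dl_ext; [|apply (dl_scal (/ Y21) _ x _ (dY2 gm x))].
  intros; cbv beta; unfold Rdiv; ring. unfold Rdiv; ring. Qed.
Lemma dVpf x : derivable_pt_lim (fun x => Y1 gm x / Y21) x (gm ^ 2 * (Y2 gm x / Y21)).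
Proof. eapply dl_eq. eapply dl_ext; [|apply (dl_scal (/ Y21) _ x _ (dY1 gm x))].
  intros; cbv beta; unfold Rdiv; ring. unfold Rdiv; ring. Qed.
Lemma dUf x : derivable_pt_lim (fun x => Y2 gm (1 - x) / Y21) x (- Y1 gm (1 - x) / Y21).
Proof. eapply dl_eq. eapply dl_ext; [|apply (dl_scal (/ Y21) _ x _ (dl_comp (fun y => 1 - y) (Y2 gm) x _ _ (d1mx x) (dY2 gm (1 - x))))].
  intros; cbv beta; unfold Rdiv; ring. unfold Rdiv; ring. Qed.
Lemma dUpf x : derivable_pt_lim (fun x => - Y1 gm (1 - x) / Y21) x (gm ^ 2 * (Y2 gm (1 - x) / Y21)).
Proof. eapply dl_eq. eapply dl_ext; [|apply (dl_scal (- / Y21) _ x _ (dl_comp (fun y => 1 - y) (Y1 gm) x _ _ (d1mx x) (dY1 gm (1 - x))))].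
  intros; cbv beta; unfold Rdiv; ring. unfold Rdiv; ring. Qed.

Lemma PV r : I01 r -> v r * Y1 gm (sg r) - w r * Y2 gm (sg r) = ea.
Proof.
  intros Hr. pose proof Y21p.
  pose proof (W_const _ _ dVf dVpf r Hr) as W. cbv beta in W.
  rewrite sg0, v0, Y2_0, Y1_0 in W.
  replace (v r * Y1 gm (sg r) - w r * Y2 gm (sg r)) with
     (Y21 * (v r * (Y1 gm (sg r) / Y21) - w r * (Y2 gm (sg r) / Y21))) by (field; lra).
  rewrite W. field. lra.
Qed.

Lemma PU r : I01 r -> v r * Y1 gm (1 - sg r) + w r * Y2 gm (1 - sg r) = eb.
Proof.
  intros Hr. pose proof Y21p.
  pose proof (W_const _ _ dUf dUpf r Hr) as W. cbv beta in W.
  pose proof (W_const _ _ dUf dUpf 1 (conj Rle_0_1 (Rle_refl 1))) as W1. cbv beta in W1.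
  rewrite <- W1 in W. rewrite sg1, v1, Rminus_diag, Y2_0, Y1_0 in W.
  replace (v r * Y1 gm (1 - sg r) + w r * Y2 gm (1 - sg r)) with
     (- Y21 * (v r * (- Y1 gm (1 - sg r) / Y21) - w r * (Y2 gm (1 - sg r) / Y21))) by (field; lra).
  rewrite W. field. lra.
Qed.

Lemma v_Y r : I01 r -> v r = Y (sg r).
Proof.
  intros Hr. pose proof Y21p. pose proof (PV r Hr) as P1. pose proof (PU r Hr) as P2.
  pose proof (Y_add gm (sg r)) as A. fold Y21 in A.
  unfold Y, Yf. fold Y21. apply (Rmult_eq_reg_r Y21); [|lra].
  rewrite <- A. unfold Rdiv. rewrite Rmult_assoc, Rinv_l by lra. rewrite <- P1, <- P2. ring.
Qed.

Lemma w0 : w 0 = Yp 0.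
Proof.
  pose proof Y21p. pose proof (PU 0 (conj (Rle_refl 0) Rle_0_1)) as P2.
  rewrite sg0, v0, Rminus_0_r in P2. fold Y21 in P2.
  unfold Yp, Ypf. rewrite Rminus_0_r, Y1_0. fold Y21.
  apply (Rmult_eq_reg_r Y21); [|lra]. unfold Rdiv. rewrite Rmult_assoc, Rinv_l by lra. lra.
Qed.

Lemma sg_I01 r : I01 r -> I01 (sg r).
Proof.
  intros [H0 H1]. pose proof T_pos.
  assert (M : forall x y, 0 <= x -> x < y -> y <= 1 -> sg x < sg y).
  { intros x y ? ? ?. apply (mono01 sg (fun r => v r / T) x y D_sg); auto.
    intros; apply Rdiv_lt_0_compat; auto; apply v_pos. }
  split.
  - destruct (Req_dec r 0). subst; rewrite sg0; lra. rewrite <- sg0. apply Rlt_le, M; lra.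
  - destruct (Req_dec r 1). subst; rewrite sg1; lra. rewrite <- sg1. apply Rlt_le, M; lra.
Qed.

Let eap : 0 < ea. Proof. apply exp_pos. Qed.
Let ebp : 0 < eb. Proof. apply exp_pos. Qed.

Lemma Kc_sg r : I01 r -> Kc gm ea eb (sg r) = r / T.
Proof.
  intros Hr. pose proof T_pos.
  assert (D := D01_minus _ _ _ _ (D01_comp sg _ (Kc gm ea eb) (iY gm ea eb) (fun _ => True) D_sg (fun _ _ => I)
                 (fun y _ => dKc gm ea eb gm_nn' eap ebp y))
               (D01_mult _ _ _ _ D01_id (D01_const (/ T)))).
  pose proof (const01 _ _ D) as K. cbv beta in K.
  rewrite sg0, Kc_0 in K.
  assert (E : Kc gm ea eb (sg r) - r * / T = 0 - 0 * / T).
  { apply K; auto. intros x Hx. assert (Hx' : I01 x) by (unfold I01; lra).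
    unfold iY. rewrite clamp_id by (apply sg_I01; auto). fold Y. rewrite <- v_Y by auto.
    field. split; [lra| pose proof (v_pos x); lra]. }
  unfold Rdiv. lra.
Qed.

Lemma JT : JJ = / T.
Proof. pose proof (Kc_sg 1 (conj Rle_0_1 (Rle_refl 1))) as E. rewrite sg1 in E. unfold JJ, J. rewrite E.
  unfold Rdiv; ring. Qed.

Lemma sg_s r : I01 r -> sg r = s r.
Proof.
  intros Hr. apply (FK_inj gm ea eb gm_nn' eap ebp). rewrite Hs.
  unfold FK. rewrite Kc_sg by auto. fold JJ. rewrite JT. field. pose proof T_pos; lra.
Qed.

Theorem uniq_sol : lam = lamf d a b /\ (forall i r, (i < d)%nat -> I01 r -> g i r = ff d a b s i r).
Proof.
  pose proof dR' as HdR. pose proof T_pos as HT. split.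
  - pose proof (key 0 (conj (Rle_refl 0) Rle_0_1)) as K. rewrite v0 in K.
    pose proof w0 as W. unfold w in W.
    unfold lamf. fold gm ea eb Y Yp JJ. rewrite JT, <- W.
    apply (Rmult_eq_reg_r (T ^ 2 * INR d)). 2:{ apply Rgt_not_eq. apply Rmult_lt_0_compat; [nra|lra]. }
    transitivity (T ^ 2 * (S 0 ^ 2 + INR d * lam) - T ^ 2 * S 0 ^ 2). field.
    rewrite K. field. lra.
  - intros i r Hi Hr. unfold ff. fold gm ea eb Y.
    rewrite <- (exp_ln (g i r)) by (apply gpos; auto).
    f_equal. rewrite lng_eq by auto.
    rewrite <- sg_s by auto. rewrite <- v_Y by auto. unfold v at 1. rewrite ln_exp.
    replace (tau r) with (T * sg r) by (unfold sg; field; lra).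
    rewrite <- (eT i Hi). field. lra.
Qed.
End Uniq.

Theorem theorem3p1 (d : nat) (a b : nat -> R) :
  (2 <= d)%nat ->
  (forall i, (i < d)%nat -> 0 < a i) ->
  (forall i, (i < d)%nat -> 0 < b i) ->
  exists (lam : R) (f : nat -> R -> R),
    is_solution d a b lam f /\
    (forall (lam' : R) (g : nat -> R -> R), is_solution d a b lam' g ->
       lam' = lam /\ (forall i r, (i < d)%nat -> I01 r -> g i r = f i r)).
Proof.
  intros Hd Ha Hb.
  destruct (s_exists (gam d a b) (ex d a) (ex d b) (sqrt_pos _) (exp_pos _) (exp_pos _)) as [s Hs].
  exists (lamf d a b), (ff d a b s). split.
  - apply exist_sol; auto.
  - intros lam' g [g1 [g2 [H1 [H2 [H3 H4]]]]].
    exact (uniq_sol d a b Hd s Hs lam' g g1 g2 H1 H2 H3 H4).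
Qed.
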